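(* Let $K$ be a field, $S=K[x_1,\ldots,x_n]$, and $\alpha=(k_1,\ldots,k_n)\in\mathbb N^n$. A monomial ideal $I\subset S$ has linear quotients if and only if its expansion $I^\alpha\subset S^\alpha$ has linear quotients.
   Context: $\mathbb N$ denotes the positive integers. For $\alpha=(k_1,\ldots,k_n)\in\mathbb N^n$ let $S^\alpha=K[x_{ij}:1\le i\le n,\ 1\le j\le k_i]$ and $P_i=(x_{i1},\ldots,x_{ik_i})\subset S^\alpha$. If $I$ is a monomial ideal with minimal monomial generating set $G(I)=\{\mathbf x^{\mathbf a_1},\ldots,\mathbf x^{\mathbf a_r}\}$, its expansion is $I^\alpha=\sum_{l=1}^r P_1^{\mathbf a_l(1)}\cdots P_n^{\mathbf a_l(n)}\subset S^\alpha$. A monomial ideal $I$ has linear quotients with respect to an ordering $u_1,\ldots,u_r$ of its minimal monomial generators if for all $j=2,\ldots,r$ the colon ideal $(u_1,\ldots,u_{j-1}):(u_j)$ is generated by variables; $I$ has linear quotients if it has linear quotients with respect to some ordering of $G(I)$. *)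

(* Defs.v *)
From HB Require Import structures.
From mathcomp Require Import all_boot all_order all_algebra.
From mathcomp Require Import mpoly.
Set Implicit Arguments. Unset Strict Implicit. Unset Printing Implicit Defensive.
Import GRing.Theory.
Local Open Scope ring_scope.

Section Ideals.
Variables (R : comNzRingType) (n : nat).
Local Notation S := {mpoly R[n]}.

Definition ideal_gen (G : S -> Prop) : S -> Prop :=
  fun f => exists s : seq (S * S),
    (forall p, p \in s -> G p.2) /\ f = \sum_(p <- s) p.1 * p.2.

Definition unit_ideal : S -> Prop := ideal_gen (fun g => g = 1).

Definition ideal_mul (I J : S -> Prop) : S -> Prop :=
  ideal_gen (fun h => exists f g, I f /\ J g /\ h = f * g).

Definition ideal_pow (I : S -> Prop) (e : nat) : S -> Prop :=
  iter e (ideal_mul I) unit_ideal.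

Definition monomial_ideal (I : S -> Prop) : Prop :=
  forall f, I f <-> ideal_gen (fun g => I g /\ exists m, g = 'X_[m]) f.

Definition rdivides (u v : S) : Prop := exists q, v = q * u.

(* x^m belongs to the minimal monomial generating set G(I):
   x^m is in I and no other monomial of I divides it. *)
Definition mingen (I : S -> Prop) (m : 'X_{1..n}) : Prop :=
  I 'X_[m] /\
  forall m' : 'X_{1..n}, I 'X_[m'] -> rdivides 'X_[m'] 'X_[m] -> m' = m.

Definition colon (J : S -> Prop) (u : S) : S -> Prop := fun f => J (f * u).

Definition gen_by_vars (J : S -> Prop) : Prop :=
  exists V : seq 'I_n,
    forall f, J f <-> ideal_gen (fun g => exists i, i \in V /\ g = 'X_i) f.

Definition mon_ideal_of (s : seq 'X_{1..n}) : S -> Prop :=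
  ideal_gen (fun g => exists t, t \in s /\ g = 'X_[t]).

(* The ordering s = u_1,...,u_r gives linear quotients: for every j >= 2,
   (u_1,...,u_{j-1}) : (u_j) is generated by variables. *)
Definition linear_quotients_wrt (s : seq 'X_{1..n}) : Prop :=
  forall (pre post : seq 'X_{1..n}) (u : 'X_{1..n}),
    s = pre ++ u :: post -> pre <> [::] ->
    gen_by_vars (colon (mon_ideal_of pre) 'X_[u]).

Definition has_linear_quotients (I : S -> Prop) : Prop :=
  exists s : seq 'X_{1..n},
    [/\ uniq s, (forall m, m \in s <-> mingen I m) & linear_quotients_wrt s].

End Ideals.

Section Expansion.
Variables (R : comNzRingType) (n : nat) (k : 'I_n -> nat).

(* index type of the variables x_{ij} of S^alpha, 1 <= i <= n, 1 <= j <= k_i *)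
Definition expvar := {i : 'I_n & 'I_(k i)}.

(* S^alpha = R[x_{ij}], variables enumerated by enum_rank *)
Definition Salpha := {mpoly R[#|{: expvar}|]}.

Definition xvar (i : 'I_n) (j : 'I_(k i)) : Salpha :=
  'X_(enum_rank (Tagged (fun i => 'I_(k i)) j : expvar)).

Definition Pideal (i : 'I_n) : Salpha -> Prop :=
  ideal_gen (fun g => exists j : 'I_(k i), g = @xvar i j).

Definition Pprod (a : 'X_{1..n}) : Salpha -> Prop :=
  foldr (fun i J => ideal_mul (ideal_pow (Pideal i) (a i)) J)
        (unit_ideal (R:=R) (n:=#|{: expvar}|)) (enum 'I_n).

Definition expansion (I : {mpoly R[n]} -> Prop) : Salpha -> Prop :=
  ideal_gen (fun f => exists a, mingen I a /\ Pprod a f).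

End Expansion.

Arguments expansion {R n} k I.

(* Main.v *)
Require Import Defs.
From HB Require Import structures.
From mathcomp Require Import all_boot all_order all_algebra.
From mathcomp Require Import mpoly.
From mathcomp Require Import zify.
Set Implicit Arguments. Unset Strict Implicit. Unset Printing Implicit Defensive.
Import GRing.Theory Order.TTheory.

Section Alg.
Variables (R : comNzRingType) (N : nat).
Local Open Scope ring_scope.
Local Notation S := {mpoly R[N]}.
Local Notation T := 'X_{1..N}.

Definition up (G : T -> Prop) (m : T) := exists t, G t /\ (t <= m)%MM.
Definition monid (G : T -> Prop) : S -> Prop :=
  ideal_gen (fun g => exists m, G m /\ g = 'X_[m]).
Definition monU (U : T -> Prop) (f : S) := forall m, m \in msupp f -> U m.
Definition upc (U : T -> Prop) := forall x y, U x -> (x <= y)%MM -> U y.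

Lemma gen_in (P : S -> Prop) g : P g -> ideal_gen P g.
Proof. by move=> Pg; exists [:: (1, g)]; split; [move=> p; rewrite inE => /eqP -> | rewrite big_seq1 mul1r]. Qed.

Lemma gen0 (P : S -> Prop) : ideal_gen P 0.
Proof. by exists [::]; split => // ; rewrite big_nil. Qed.

Lemma genD (P : S -> Prop) f g : ideal_gen P f -> ideal_gen P g -> ideal_gen P (f + g).
Proof.
move=> [s1 [H1 ->]] [s2 [H2 ->]]; exists (s1 ++ s2); split; last by rewrite big_cat.
by move=> p; rewrite mem_cat => /orP [/H1|/H2].
Qed.

Lemma genM (P : S -> Prop) c f : ideal_gen P f -> ideal_gen P (c * f).
Proof.
move=> [s [H ->]]; exists [seq (c * p.1, p.2) | p <- s]; split.
  by move=> p /mapP [q qs ->] /=; apply: H.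
by rewrite big_map mulr_sumr; apply: eq_bigr => p _; rewrite mulrA.
Qed.

Lemma gen_sum (P : S -> Prop) (I : eqType) (r : seq I) (F : I -> S) :
  (forall i, i \in r -> ideal_gen P (F i)) -> ideal_gen P (\sum_(i <- r) F i).
Proof.
elim: r => [|x r IH] H; first by rewrite big_nil; apply: gen0.
rewrite big_cons; apply: genD; first by apply: H; rewrite inE eqxx.
by apply: IH => i Hi; apply: H; rewrite inE Hi orbT.
Qed.

Lemma gen_sub (P Q : S -> Prop) f :
  (forall g, P g -> ideal_gen Q g) -> ideal_gen P f -> ideal_gen Q f.
Proof.
move=> H [s [Hs ->]]; apply: gen_sum => p ps.
by apply: genM; apply: H; apply: Hs.
Qed.

Lemma msupp0' : msupp (0 : S) = [::].
Proof. by apply/eqP; rewrite msupp_eq0. Qed.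

Lemma mem_msuppMX (f : S) v m : (m \in msupp (f * 'X_[v])) = 
   has (fun m0 => m == (v + m0)%MM) (msupp f).
Proof.
rewrite (perm_mem (msuppMX f v)); apply/mapP/hasP => [[m0 H ->]|[m0 H /eqP ->]];
  by exists m0.
Qed.

Lemma monidP G f : monid G f <-> monU (up G) f.
Proof.
split.
  move=> [s [Hs ->]] {f}; elim: s Hs => [|p s IH] Hs m.
    by rewrite big_nil msupp0'.
  rewrite big_cons => /msuppD_le; rewrite mem_cat => /orP [|].
    have [t [Gt ->]] := Hs p (mem_head _ _).
    rewrite mem_msuppMX => /hasP [m0 _ /eqP ->].
    by exists t; split => //; apply: lem_addr.
  by apply: IH => q qs; apply: Hs; rewrite inE qs orbT.
move=> H; rewrite [f]mpolyE; apply: gen_sum => m /H [t [Gt le]].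
rewrite -(submK le) mpolyXD scalerAl -mul_mpolyC -mulrA.
apply: genM; apply: genM; apply: gen_in; by exists t.
Qed.

Lemma monUX U m : monU U 'X_[m] <-> U m.
Proof.
rewrite /monU msuppX; split; first by apply; rewrite mem_head.
by move=> Um m'; rewrite inE => /eqP ->.
Qed.

Lemma up_upc U : upc U -> forall m, up U m <-> U m.
Proof. by move=> H m; split => [[t [Ut le]]|Um]; [apply: H Ut le|exists m; split => //; apply: lepm_refl]. Qed.

Lemma monidU U f : upc U -> (monid U f <-> monU U f).
Proof.
move=> H; rewrite monidP; split => K m /K; by move/(up_upc H).
Qed.

Lemma monU_gen U (P : S -> Prop) f : upc U ->
  (forall g, P g -> monU U g) -> ideal_gen P f -> monU U f.
Proof.
move=> H HP Pf; apply/(monidU _ H); apply: gen_sub Pf => g /HP /(monidU _ H).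
by [].
Qed.

Lemma gen_ext (P Q : S -> Prop) f : (forall g, P g <-> Q g) -> (ideal_gen P f <-> ideal_gen Q f).
Proof. by move=> H; split; apply: gen_sub => g /H; apply: gen_in. Qed.

Lemma rdividesX m' m : rdivides 'X_[m'] ('X_[m] : S) <-> (m' <= m)%MM.
Proof.
split.
  move=> [q eq]; have : m \in msupp ('X_[m] : S) by rewrite msuppX mem_head.
  rewrite eq mem_msuppMX => /hasP [m0 _ /eqP ->]; exact: lem_addr.
by move=> le; exists 'X_[m - m']; rewrite -mpolyXD submK.
Qed.


Definition varsP (V : seq 'I_N) (m : T) := exists i, i \in V /\ (U_(i) <= m)%MM.

Lemma varsidP V f : ideal_gen (fun g => exists i, i \in V /\ g = 'X_i) f <-> monU (varsP V) f.
Proof.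
rewrite (@gen_ext _ (fun g => exists m, (exists i, i \in V /\ m = U_(i)%MM) /\ g = 'X_[m])).
  rewrite -/(monid _ f) monidP; split => H m /H.
    by move=> [t [[i [iV ->]] le]]; exists i.
  by move=> [i [iV le]]; exists U_(i)%MM; split => //; exists i.
move=> g; split => [[i [iV ->]]|[m [[i [iV ->]] ->]]]; last by exists i.
by exists U_(i)%MM; split => //; exists i.
Qed.

Lemma colonX G v f : colon (monid G) 'X_[v] f <-> monU (fun m => up G (v + m)) f.
Proof.
rewrite /colon monidP; split => H m.
  by move=> mf; apply: H; rewrite mem_msuppMX; apply/hasP; exists m.
by rewrite mem_msuppMX => /hasP [m0 m0f /eqP ->]; apply: H.
Qed.

Lemma gbvP G v : gen_by_vars (colon (monid G) 'X_[v]) <->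
  exists V, forall m, up G (v + m) <-> varsP V m.
Proof.
split => [[V HV]|[V HV]]; exists V.
  move=> m; have := HV 'X_[m]; rewrite colonX varsidP !monUX; by [].
move=> f; rewrite colonX varsidP; split => H m /H /HV; by [].
Qed.

Lemma monU_ext U U' f : (forall m, U m <-> U' m) -> monU U f <-> monU U' f.
Proof. by move=> H; split => K m /K /H. Qed.

Lemma mul_ext (I I' J J' : S -> Prop) f : (forall g, I g <-> I' g) ->
  (forall g, J g <-> J' g) -> ideal_mul I J f <-> ideal_mul I' J' f.
Proof.
move=> HI HJ; apply: gen_ext => g; split => [[p [q [Ip [Jq ->]]]]|[p [q [Ip [Jq ->]]]]];
  exists p, q; split; by [apply/HI|split; [apply/HJ|]].
Qed.

Lemma mulP UA UB f : ideal_mul (monU UA) (monU UB) f <->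
  monU (fun m => exists x y, UA x /\ UB y /\ (x + y <= m)%MM) f.
Proof.
have Hupc : upc (fun m => exists x y, UA x /\ UB y /\ (x + y <= m)%MM).
  move=> m m' [x [y [? [? le]]]] le'; exists x, y; split => //; split => //.
  exact: lepm_trans le le'.
split.
  apply: monU_gen => // g [p [q [Ap [Bq ->]]]] m /msuppM_le /allpairsP [[m1 m2] [/= m1p m2q ->]].
  exists m1, m2; split; first exact: Ap.
  by split; [apply: Bq|apply: lepm_refl].
move=> /(monidU _ Hupc) H; apply: gen_sub H => g [m [[x [y [Ax [By le]]]] ->]].
rewrite -(submK le) mpolyXD; apply: genM; apply: gen_in.
exists 'X_[x], 'X_[y]; split; first exact/monUX.
by split; [exact/monUX|rewrite mpolyXD].
Qed.

Lemma unitP f : unit_ideal f <-> monU (fun _ => True) f.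
Proof.
rewrite /unit_ideal (@gen_ext _ (fun g => exists m, m = 0%MM /\ g = 'X_[m])).
  rewrite -/(monid _ f) monidP; apply: monU_ext => m; split => // _.
  by exists 0%MM; split => //; apply/mnm_lepP => i; rewrite mnm0E.
by move=> g; split => [->|[m [-> ->]]]; [exists 0%MM; rewrite mpolyX0|rewrite mpolyX0].
Qed.

End Alg.

Section Comb.
Variable N : nat.
Local Notation T := 'X_{1..N}.
Local Open Scope nat_scope.

Definition cond2 (pre : seq T) (v : T) := forall w, w \in pre ->
  exists i, (v i < w i)%N /\ exists2 w', w' \in pre & (w' <= v + U_(i))%MM.

Lemma cg_cond2 pre v : (exists V, forall m, up (fun t => t \in pre) (v + m) <-> varsP V m)
   <-> cond2 pre v.
Proof.
split.
  move=> [V HV] w wpre.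
  have [|i [iV]] := (HV (w - v)%MM).1.
    exists w; split => //; apply/mnm_lepP => i; rewrite mnmDE mnmBE; lia.
  rewrite lep1mP mnmBE => hi; exists i; split; first lia.
  have [|t [tp le]] := (HV U_(i)%MM).2; last by exists t.
  by exists i; split => //; apply: lepm_refl.
move=> H; exists [seq i <- enum 'I_N | has (fun w => (w <= v + U_(i))%MM) pre].
move=> m; split.
  move=> [t [tp /mnm_lepP le]]; have [i [lt [w' w'p le']]] := H t tp.
  exists i; split; first by rewrite mem_filter mem_enum andbT; apply/hasP; exists w'.
  rewrite lep1mP; have := le i; rewrite mnmDE; lia.
move=> [i [iV /mnm_lepP le]]; move: iV; rewrite mem_filter => /andP [/hasP [w wp /mnm_lepP lw] _].
exists w; split => //; apply/mnm_lepP => j; have := lw j; have := le j.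
rewrite !mnmDE; lia.
Qed.

Definition LQc (s : seq T) := forall pre post u, s = pre ++ u :: post -> cond2 pre u.

Lemma lqP (R : comNzRingType) s : linear_quotients_wrt R s <-> LQc s.
Proof.
split => H pre post u E.
  case: pre E => [|w pre] E; first by move=> w.
  by apply/cg_cond2/gbvP; apply: (H _ post).
by move=> _; apply/gbvP/cg_cond2; apply: H E.
Qed.


Definition LQi (s : seq T) := forall j, j < size s -> cond2 (take j s) (nth 0%MM s j).

Lemma LQcP s : LQc s <-> LQi s.
Proof.
split => H.
  move=> j lt; apply: (H _ (drop j.+1 s)).
  by rewrite -drop_nth // cat_take_drop.
move=> pre post u E; have := H (size pre).
rewrite E take_size_cat // nth_cat ltnn subnn /=; apply.
by rewrite size_cat /= addnS ltnS leq_addr.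
Qed.

Lemma filter_split (P : pred T) s pre u post : filter P s = pre ++ u :: post ->
  exists s1 s2, s = s1 ++ u :: s2 /\ filter P s1 = pre.
Proof.
elim: s pre => [|x s IH] pre /=; first by case: pre.
case Px: (P x) => E.
  case: pre E => [|y pre] /= [<-] E; first by exists [::], s.
  have [s1 [s2 [-> <-]]] := IH _ E; exists (x :: s1), s2; split => //=.
  by rewrite Px.
have [s1 [s2 [-> <-]]] := IH _ E; exists (x :: s1), s2; split => //=.
by rewrite Px.
Qed.

Lemma LQc_filter (P : pred T) s :
  (forall x y, (x <= y)%MM -> P y -> P x) ->
  (forall v w i, P v -> P w -> v i < w i -> P (v + U_(i))%MM) ->
  LQc s -> LQc (filter P s).
Proof.
move=> Pdown Padd H pre post u E.
have uP : P u.
  have : u \in filter P s by rewrite E mem_cat mem_head orbT.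
  by rewrite mem_filter => /andP [].
have [s1 [s2 [Es Ef]]] := filter_split E.
move=> w; rewrite -Ef mem_filter => /andP [Pw ws1].
have [i [lt [w' w's1 le]]] := H _ _ _ Es w ws1; exists i; split => //.
exists w' => //; rewrite mem_filter w's1 andbT; apply: Pdown le _.
exact: Padd uP Pw lt.
Qed.

End Comb.

Section CombMap.
Variables (n N : nat) (f : 'X_{1..n} -> 'X_{1..N}) (g : 'I_n -> 'I_N).
Local Open Scope nat_scope.
Hypothesis fle : forall x y, (f x <= f y)%MM -> (x <= y)%MM.
Hypothesis fadd : forall x i, f (x + U_(i))%MM = (f x + U_(g i))%MM.
Hypothesis fsupp : forall x l, f x l != 0 -> exists i, l = g i.
Hypothesis fg : forall x i, f x (g i) = x i.

Lemma LQc_map s : LQc (map f s) -> LQc s.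
Proof.
move=> H pre post u E w wpre.
have := H (map f pre) (map f post) (f u); rewrite E map_cat /= => /(_ erefl).
move=> /(_ (f w) (map_f f wpre)) [l [lt [w'' /mapP [w0 w0p ->] le]]].
have [i El] : exists i, l = g i by apply: (fsupp (x:=w)); move: lt; case: (f w l).
move: lt le; rewrite El !fg -fadd => lt le; exists i; split => //.
by exists w0 => //; apply: fle.
Qed.
End CombMap.

Section ExpComb.
Variables (n : nat) (k : 'I_n -> nat).
Local Notation N := #|{: expvar k}|.
Local Notation T := 'X_{1..N}.

Definition idx (i : 'I_n) (j : 'I_(k i)) : 'I_N :=
  enum_rank (Tagged (fun i => 'I_(k i)) j : expvar k).
Definition tg (l : 'I_N) : 'I_n := tag (enum_val l).
Definition gs (i : 'I_n) (b : T) := (\sum_(l < N | tg l == i) b l)%N.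
Definition sh (b : T) : 'X_{1..n} := [multinom gs i b | i < n].

Lemma tg_idx i (j : 'I_(k i)) : tg (idx j) = i.
Proof. by rewrite /tg /idx enum_rankK. Qed.

Lemma idx_tg l : exists j : 'I_(k (tg l)), l = idx j.
Proof.
rewrite /tg /idx; case E: (enum_val l) => [i j] /=; exists j.
by apply: enum_val_inj; rewrite enum_rankK E.
Qed.

Lemma gsD i x y : gs i (x + y)%MM = (gs i x + gs i y)%N.
Proof. by rewrite /gs -big_split; apply: eq_bigr => l _; rewrite mnmDE. Qed.

Lemma gsU i l : gs i U_(l)%MM = (tg l == i).
Proof.
rewrite /gs big_mkcond (bigD1 l) //= mnm1E eqxx big1 ?addn0; first by case: (tg l == i).
by move=> l' ne; rewrite mnm1E; case: ifP => // _; have /negbTE -> : l != l' by rewrite eq_sym.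
Qed.

Lemma shD x y : sh (x + y)%MM = (sh x + sh y)%MM.
Proof. by apply/mnmP => i; rewrite mnmDE !mnmE gsD. Qed.

Lemma shU l : sh U_(l)%MM = U_(tg l)%MM.
Proof. by apply/mnmP => i; rewrite mnmE gsU mnm1E. Qed.

Lemma gs_le i x y : (x <= y)%MM -> gs i x <= gs i y.
Proof. by move=> /mnm_lepP H; apply: leq_sum => l _; apply: H. Qed.

Lemma sh_le x y : (x <= y)%MM -> (sh x <= sh y)%MM.
Proof. by move=> H; apply/mnm_lepP => i; rewrite !mnmE; apply: gs_le. Qed.

Lemma gs_pos i (b : T) : 0 < gs i b -> exists l, tg l = i /\ b l != 0.
Proof.
move=> H; have : ~~ [forall l, (tg l == i) ==> (b l == 0)].
  apply: contraTN H => /forallP H; rewrite -leqNgt leqn0 /gs; apply/eqP.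
  by apply: big1 => l E; exact/eqP/(implyP (H l) E).
by rewrite negb_forall => /existsP [l]; rewrite negb_imply => /andP [/eqP ? ?]; exists l.
Qed.

Lemma le_gs i (b : T) l : tg l = i -> b l <= gs i b.
Proof. by move=> E; rewrite /gs (bigD1 l) ?E //= leq_addr. Qed.

Lemma mdeg_sh b : mdeg (sh b) = mdeg b.
Proof.
rewrite !mdegE (partition_big tg xpredT) //=; apply: eq_bigr => i _.
by rewrite mnmE.
Qed.

Lemma lower b a : (a <= sh b)%MM -> exists b', (b' <= b)%MM /\ sh b' = a.
Proof.
move: {2}(mdeg b) (leqnn (mdeg b)) => d; elim: d b => [|d IH] b.
  rewrite leqn0 mdeg_eq0 => /eqP -> le; exists 0%MM; split; first exact: lepm_refl.
  apply/mnmP => i; move/mnm_lepP: le => /(_ i); rewrite !mnmE /gs big1 => [|l _]; last by rewrite mnm0E.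
  intros; lia.
move=> hd le.
have [E|] := eqVneq (sh b) a; first by exists b; split => //; apply: lepm_refl.
move=> ne; have [i lt] : exists i, a i < sh b i.
  apply/existsP; apply: contraNT ne; rewrite negb_exists => /forallP H.
  apply/eqP/mnmP => i; move/mnm_lepP: le => /(_ i); have := H i; intros; lia.
have [l [tl bl]] : exists l, tg l = i /\ b l != 0 by apply: gs_pos; rewrite mnmE in lt; intros; lia.
have Hl : (U_(l) <= b)%MM by rewrite lep1mP.
have Eb := submK Hl; set b1 := (b - U_(l))%MM in Eb.
have H1 : mdeg b1 <= d by move: hd; rewrite -Eb mdegD mdeg1; intros; lia.
have H2 : (a <= sh b1)%MM.
  apply/mnm_lepP => i'; move/mnm_lepP: le => /(_ i'); rewrite -Eb shD shU mnmDE mnm1E tl.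
  by case: eqP lt => [<-|]; rewrite -Eb shD shU mnmDE mnm1E tl ?eqxx; intros; lia.
have [b' [le' E']] := IH b1 H1 H2.
exists b'; split => //; apply: lepm_trans le' _; rewrite -Eb; apply: lem_addr.
Qed.


Lemma sh_eq_le b' b : (b' <= b)%MM -> sh b' = sh b -> b' = b.
Proof.
move=> le E; have Eb := submK le; set c := (b - b')%MM in Eb.
have : sh c = 0%MM.
  apply/mnmP => i; have := congr1 (fun m : 'X_{1..n} => m i) E.
  by rewrite -Eb shD mnmDE mnm0E; intros; lia.
move=> /(congr1 mdeg); rewrite mdeg_sh mdeg0 => /eqP; rewrite mdeg_eq0 => /eqP Ec.
by rewrite -Eb Ec add0m.
Qed.

Lemma lem_anti (x y : 'X_{1..n}) : (x <= y)%MM -> (y <= x)%MM -> x = y.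
Proof.
move=> /mnm_lepP H1 /mnm_lepP H2; apply/mnmP => i; have := H1 i; have := H2 i; intros; lia.
Qed.

Section F1.
Variable M : 'X_{1..n} -> Prop.
Definition mgI a := M a /\ forall a', M a' -> (a' <= a)%MM -> a' = a.
Definition Ua (b : T) := exists a, mgI a /\ (a <= sh b)%MM.
Definition mgE b := Ua b /\ forall b', Ua b' -> (b' <= b)%MM -> b' = b.

Lemma F1 b : mgE b <-> mgI (sh b).
Proof.
split.
  move=> [[a [ma le]] H]; have [b' [le' E]] := lower le.
  have -> : b = b' by apply/esym/H => //; exists a; split => //; rewrite E; apply: lepm_refl.
  by rewrite E.
move=> H; split; first by exists (sh b); split => //; apply: lepm_refl.
move=> b' [a' [[Ma' _] le'] le]; apply: sh_eq_le => //.
have E : a' = sh b by apply: H.2 => //; apply: lepm_trans le' (sh_le le).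
by apply: lem_anti; [apply: sh_le | rewrite -E].
Qed.
End F1.


Definition geO (x y : T) := (y <= x)%O.

Definition block (a : 'X_{1..n}) : seq T :=
  sort geO [seq b <- map val (enum {: 'X_{1..N < (mdeg a).+1}}) | sh b == a].

Lemma mem_block a b : (b \in block a) = (sh b == a).
Proof.
rewrite mem_sort mem_filter; case: eqP => //= E.
have H : mdeg b < (mdeg a).+1 by rewrite -E mdeg_sh.
by apply/mapP; exists (BMultinom H) => //; rewrite mem_enum.
Qed.

Lemma uniq_block a : uniq (block a).
Proof.
by rewrite sort_uniq filter_uniq // map_inj_uniq ?enum_uniq //; apply: val_inj.
Qed.

Lemma sorted_block a : sorted geO (block a).
Proof. by apply: sort_sorted => x y; apply: le_total. Qed.

Definition Fl (s : seq 'X_{1..n}) := flatten (map block s).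

Lemma mem_Fl s b : (b \in Fl s) = (sh b \in s).
Proof.
by elim: s => [|a s IH] //=; rewrite mem_cat IH mem_block inE.
Qed.

Lemma uniq_Fl s : uniq s -> uniq (Fl s).
Proof.
elim: s => [|a s IH] //= /andP [aS us]; rewrite cat_uniq uniq_block IH //=.
rewrite andbT; apply/hasPn => b; rewrite mem_Fl mem_block => bs.
by apply/eqP => E; move: aS; rewrite -E bs.
Qed.


Lemma geO_trans : transitive geO.
Proof. by move=> y x z h1 h2; apply: le_trans h2 h1. Qed.

Lemma gs_lt i (v w : T) l0 : tg l0 = i -> v l0 < w l0 ->
  (forall l, tg l = i -> v l <= w l) -> gs i v < gs i w.
Proof.
move=> t0 lt H; rewrite /gs (bigD1 l0) ?t0 //= [X in _ < X](bigD1 l0) ?t0 //=.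
rewrite -addSn leq_add //; apply: leq_sum => l /andP [/eqP tl _]; exact: H.
Qed.

Lemma block_step s u j : cond2 s u -> j < size (block u) ->
  cond2 (Fl s ++ take j (block u)) (nth 0%MM (block u) j).
Proof.
move=> Hsu lt; set B := block u; set v := nth 0%MM B j.
have vB : v \in B := mem_nth _ lt.
have shv : sh v = u by apply/eqP; rewrite -mem_block.
move=> w; rewrite mem_cat => /orP [wF | wB].
  rewrite mem_Fl in wF; have [i [lti [a'' a''s le]]] := Hsu _ wF.
  have [l [tl ltl]] : exists l, tg l = i /\ v l < w l.
    have : ~~ [forall l, (tg l == i) ==> (w l <= v l)].
      apply/negP => /forallP H; move: lti; rewrite -shv !mnmE ltnNge => /negP; apply.
      by apply: leq_sum => l /eqP tl; have := H l; rewrite tl eqxx.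
    rewrite negb_forall => /existsP [l]; rewrite negb_imply -ltnNge => /andP [/eqP ? ?].
    by exists l.
  exists l; split => //.
  have Hle : (a'' <= sh (v + U_(l)))%MM by rewrite shD shU shv tl.
  have [w'' [le'' E'']] := lower Hle.
  by exists w'' => //; rewrite mem_cat mem_Fl E'' a''s.
have wB' : w \in B := mem_take wB.
have ltidx : index w B < j by rewrite -(in_take _ wB').
have idxv : index v B = j by apply: index_uniq => //; apply: uniq_block.
have lev : geO w v.
  by apply: (@sorted_ltn_index _ geO geO_trans B (sorted_block u)) => //; rewrite idxv.
have nev : w != v by apply: contraTneq ltidx => ->; rewrite idxv ltnn.
have ltvw : (v < w)%O by rewrite lt_def nev.
have shw : sh w = u by apply/eqP; rewrite -mem_block.
have Emd : mdeg v = mdeg w by rewrite -mdeg_sh shv -shw mdeg_sh.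
have [l0 eqb lt0] := ltmcP Emd ltvw.
have [l1 [tl1 lt1]] : exists l1, tg l1 = tg l0 /\ w l1 < v l1.
  have : ~~ [forall l, (tg l == tg l0) ==> (v l <= w l)].
    apply/negP => /forallP H.
    have := @gs_lt (tg l0) v w l0 erefl lt0 (fun l tl => implyP (H l) (introT eqP tl)).
    by have := congr1 (fun m : 'X_{1..n} => m (tg l0)) (etrans shv (esym shw)); rewrite !mnmE => ->; rewrite ltnn.
  rewrite negb_forall => /existsP [l]; rewrite negb_imply -ltnNge => /andP [/eqP ? ?].
  by exists l.
have l01 : l0 < l1.
  case: (ltngtP l0 l1) => // [h|h]; first by move: lt1; rewrite eqb // ltnn.
  by move: lt1; rewrite -(val_inj h) => /(ltn_trans lt0); rewrite ltnn.
have Hl1 : (U_(l1) <= v)%MM by rewrite lep1mP; case: (v l1) lt1.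
have Ev := submK Hl1; set v1 := (v - U_(l1))%MM in Ev.
set v' := (v1 + U_(l0))%MM.
have shv' : sh v' = u by rewrite /v' shD shU -tl1 -shU -shD Ev.
have v'B : v' \in B by rewrite mem_block shv'.
have ltv' : (v < v')%O.
  apply/ltmcP; first by rewrite /v' -Ev !mdegD !mdeg1.
  exists l0.
    move=> l ll0; rewrite /v' -Ev !mnmDE !mnm1E.
    have /negbTE -> : l0 != l by apply: contraTneq ll0 => ->; rewrite ltnn.
    have /negbTE -> : l1 != l by apply: contraTneq ll0 => <-; rewrite -leqNgt ltnW.
    by [].
  rewrite /v' -Ev !mnmDE !mnm1E eqxx.
  have /negbTE -> : l1 != l0 by apply: contraTneq l01 => ->; rewrite ltnn.
  by rewrite addn0 addn1.
have idx' : index v' B < j.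
  rewrite -idxv; case: (ltngtP (index v' B) (index v B)) => // h.
    have : geO v v' by apply: (@sorted_ltn_index _ geO geO_trans B (sorted_block u)).
    by rewrite /geO => /(lt_le_trans ltv'); rewrite ltxx.
  have : nth 0%MM B (index v' B) = nth 0%MM B (index v B) by rewrite h.
  by rewrite !nth_index // => E; move: ltv'; rewrite E ltxx.
exists l0; split => //; exists v'; first by rewrite mem_cat (in_take _ v'B) idx' orbT.
rewrite /v' -Ev; apply/mnm_lepP => l; rewrite !mnmDE; intros; lia.
Qed.


Lemma LQi_cat (l1 l2 : seq T) : LQi l1 ->
  (forall j, j < size l2 -> cond2 (l1 ++ take j l2) (nth 0%MM l2 j)) -> LQi (l1 ++ l2).
Proof.
move=> H1 H2 j; rewrite size_cat => lt; rewrite take_cat nth_cat.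
case: ltnP => h; first exact: H1.
apply: H2; move: lt h; intros; lia.
Qed.

Lemma LQc_rcons (s : seq 'X_{1..n}) u : LQc (rcons s u) -> LQc s /\ cond2 s u.
Proof.
move=> H; split; last by apply: (H s [::]); rewrite cats1.
by move=> pre post x E; apply: (H pre (rcons post u)); rewrite E rcons_cat.
Qed.

Lemma Fl_LQ s : LQc s -> LQi (Fl s).
Proof.
elim/last_ind: s => [|s u IH] H; first by move=> j.
have [H1 H2] := LQc_rcons H.
rewrite /Fl map_rcons -cats1 flatten_cat /= cats0; apply: LQi_cat; first exact: IH.
by move=> j lt; apply: block_step.
Qed.

Lemma forward (M : 'X_{1..n} -> Prop) s : uniq s -> (forall a, a \in s <-> mgI M a) ->
  LQc s -> exists S : seq T, [/\ uniq S, (forall b, b \in S <-> mgE M b) & LQc S].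
Proof.
move=> us Hs Ls; exists (Fl s); split; first exact: uniq_Fl.
  by move=> b; rewrite mem_Fl F1 Hs.
by apply/LQcP; apply: Fl_LQ.
Qed.


Section Rev.
Hypothesis hk : forall i, 0 < k i.

Definition jj (l : 'I_N) : nat := val (tagged (enum_val l)).
Definition z (i : 'I_n) : 'I_N := @idx i (Ordinal (hk i)).
Definition yb (b : T) := [forall l, (b l != 0) ==> (jj l == 0)].
Definition phi (a : 'X_{1..n}) : T := [multinom (if jj l == 0 then a (tg l) else 0) | l < N].
Definition psi (b : T) : 'X_{1..n} := [multinom b (z i) | i < n].

Lemma jj_idx i (j : 'I_(k i)) : jj (idx j) = j.
Proof. by rewrite /jj /idx enum_rankK. Qed.

Lemma tg_z i : tg (z i) = i. Proof. exact: tg_idx. Qed.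
Lemma jj_z i : jj (z i) = 0. Proof. by rewrite /z jj_idx. Qed.

Lemma jj0 l : jj l = 0 -> l = z (tg l).
Proof.
have [j El] := idx_tg l; rewrite /z.
move=> H; have : nat_of_ord j = 0 by rewrite -(jj_idx j) -El.
move=> Hj; rewrite {1}El; congr idx; exact: val_inj.
Qed.

Lemma z_eq i l : (z i == l) = (jj l == 0) && (tg l == i).
Proof.
apply/eqP/andP => [<-|[/eqP h /eqP <-]]; first by rewrite jj_z tg_z.
by rewrite -jj0.
Qed.

Lemma phi_z a i : phi a (z i) = a i.
Proof. by rewrite mnmE jj_z tg_z. Qed.

Lemma phi_supp a l : phi a l != 0 -> exists i, l = z i.
Proof.
rewrite mnmE; case: ifP => [/eqP h _|_]; last by rewrite eqxx.
by exists (tg l); apply: jj0.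
Qed.

Lemma phi_le x y : (phi x <= phi y)%MM -> (x <= y)%MM.
Proof. by move=> /mnm_lepP H; apply/mnm_lepP => i; have := H (z i); rewrite !phi_z. Qed.

Lemma phi_add x i : phi (x + U_(i))%MM = (phi x + U_(z i))%MM.
Proof.
apply/mnmP => l; rewrite [RHS]mnmDE /phi !mnmE z_eq.
by case: (jj l == 0) => //=; rewrite eq_sym.
Qed.

Lemma yb_phi a : yb (phi a).
Proof. by apply/forallP => l; rewrite /phi multinomE tnth_mktuple; case: (jj l == 0); rewrite ?implybT. Qed.

Lemma phi_psi b : yb b -> phi (psi b) = b.
Proof.
move=> /forallP H; apply/mnmP => l; rewrite !mnmE.
case: eqP => [/jj0 <- //|ne]; have := H l.
by case: (b l) => // m; rewrite implyTb => /eqP.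
Qed.

Lemma psi_phi a : psi (phi a) = a.
Proof. by apply/mnmP => i; rewrite mnmE phi_z. Qed.

Lemma sh_phi a : sh (phi a) = a.
Proof.
apply/mnmP => i; rewrite mnmE /gs (bigD1 (z i)) ?tg_z //= phi_z big1 ?addn0 //.
move=> l /andP [/eqP tl ne]; apply/eqP; apply: contraNT ne => /phi_supp [i' E].
by rewrite E -tl E tg_z.
Qed.

Lemma reverse (M : 'X_{1..n} -> Prop) (S : seq T) : uniq S -> (forall b, b \in S <-> mgE M b) ->
  LQc S -> exists s, [/\ uniq s, (forall a, a \in s <-> mgI M a) & LQc s].
Proof.
move=> uS HS LS; set W := filter yb S.
have LW : LQc W.
  apply: LQc_filter LS.
    move=> x y /mnm_lepP le /forallP H; apply/forallP => l; apply/implyP => xl.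
    by apply: (implyP (H l)); move: xl (le l); case: (x l); case: (y l).
  move=> v w i /forallP Hv /forallP Hw lt; apply/forallP => l; apply/implyP.
  rewrite mnmDE mnm1E; case: (eqVneq i l) => [<- _|ne].
    by apply: (implyP (Hw i)); case: (w i) lt.
  by rewrite addn0; apply: (implyP (Hv l)).
have EW : map phi (map psi W) = W.
  rewrite -map_comp -[RHS]map_id; apply/eq_in_map => b.
  by rewrite mem_filter => /andP [yb_b _] /=; apply: phi_psi.
exists (map psi W); split.
- rewrite map_inj_in_uniq ?filter_uniq // => x y.
  rewrite !mem_filter => /andP [yx _] /andP [yy _] E.
  by rewrite -(phi_psi yx) -(phi_psi yy) E.
- move=> a; split.
    move=> /mapP [b]; rewrite mem_filter => /andP [yb_b /HS] /F1.
    by rewrite -(phi_psi yb_b) sh_phi psi_phi => H ->.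
  move=> H; apply/mapP; exists (phi a); last by rewrite psi_phi.
  by rewrite mem_filter yb_phi /=; apply/HS/F1; rewrite sh_phi.
- apply: (@LQc_map _ _ phi z phi_le phi_add _ phi_z); last by rewrite EW.
  by move=> x l /phi_supp.
Qed.

End Rev.

End ExpComb.

Section ExpAlg.
Variables (R : comNzRingType) (n : nat) (k : 'I_n -> nat).
Local Notation N := #|{: expvar k}|.
Local Notation T := 'X_{1..N}.

Lemma PidealP i f : Pideal (R:=R) i f <-> monU (fun m => 0 < @gs n k i m) f.
Proof.
rewrite /Pideal (@gen_ext _ _ _ (fun g => exists m, (exists j : 'I_(k i), m = U_(idx j)%MM) /\ g = 'X_[m])).
  rewrite -/(monid _ f) monidP; apply: monU_ext => m; split.
    move=> [t [[j ->] le]]; move: le; rewrite lep1mP => ne.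
    by apply: leq_trans (le_gs m (tg_idx j)); case: (m (idx j)) ne.
  move=> /gs_pos [l [tl ml]]; subst i; have [j El] := idx_tg l.
  by exists U_(l)%MM; split; [exists j; rewrite -El | rewrite lep1mP].
move=> g; split => [[j ->]|[m [[j ->] ->]]]; last by exists j.
by exists U_(idx j)%MM; split => //; exists j.
Qed.


Lemma powP i e f : ideal_pow (Pideal (R:=R) i) e f <-> monU (fun m => e <= @gs n k i m) f.
Proof.
elim: e f => [|e IH] f.
  by rewrite /ideal_pow /= unitP; apply: monU_ext.
rewrite /ideal_pow iterS -/(ideal_pow _ e).
rewrite (mul_ext _ (@PidealP i) IH) mulP; apply: monU_ext => m; split.
  move=> [x [y [hx [hy le]]]]; apply: leq_trans (gs_le i le); rewrite gsD; intros; lia.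
move=> h; have [l [tl ml]] := @gs_pos n k i m (leq_trans (ltn0Sn _) h).
have Hl : (U_(l) <= m)%MM by rewrite lep1mP.
exists U_(l)%MM, (m - U_(l))%MM; rewrite gsU tl eqxx; split => //; split.
  by move: h; rewrite -{1}(submK Hl) gsD gsU tl eqxx; intros; lia.
by rewrite addmC submK //; apply: lepm_refl.
Qed.

Definition restr i (m : T) : T := [multinom if tg l == i then m l else 0 | l < N].

Lemma foldP a (r : seq 'I_n) f : uniq r ->
  foldr (fun i J => ideal_mul (ideal_pow (Pideal (R:=R) i) (a i)) J) (unit_ideal (R:=R) (n:=N)) r f
  <-> monU (fun m => forall i, i \in r -> a i <= @gs n k i m) f.
Proof.
elim: r f => [|i r IH] f /=.
  by move=> _; rewrite unitP; apply: monU_ext.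
move=> /andP [ir ur]; rewrite (mul_ext _ (@powP i (a i)) (fun g => IH g ur)) mulP.
apply: monU_ext => m; split.
  move=> [x [y [hx [hy le]]]] i'; rewrite inE => /orP [/eqP ->|i'r].
    by apply: leq_trans hx _; apply: gs_le; apply: lepm_trans le; apply: lem_addr.
  by apply: leq_trans (hy _ i'r) _; apply: gs_le; apply: lepm_trans le; apply: lem_addl.
move=> H; have Hr : (restr i m <= m)%MM.
  by apply/mnm_lepP => l; rewrite mnmE; case: ifP.
exists (restr i m), (m - restr i m)%MM; split.
  rewrite /gs (eq_bigr (fun l => m l)); first by apply: H; rewrite mem_head.
  by move=> l /eqP tl; rewrite mnmE tl eqxx.
split; last by rewrite addmC submK //; apply: lepm_refl.
move=> i' i'r; have hi : i' \in i :: r by rewrite inE i'r orbT.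
have := H i' hi.
rewrite -{1}(submK Hr) gsD.
have -> : @gs n k i' (restr i m) = 0.
  apply: big1 => l /eqP tl; rewrite mnmE tl.
  by case: eqP => // E; move: ir; rewrite -E i'r.
by rewrite addn0.
Qed.

Lemma PprodP a f : Pprod (R:=R) (k:=k) a f <-> monU (fun m => (a <= sh m)%MM) f.
Proof.
rewrite /Pprod foldP ?enum_uniq //; apply: monU_ext => m; split.
  by move=> H; apply/mnm_lepP => i; rewrite mnmE; apply: H; rewrite mem_enum.
by move=> /mnm_lepP H i _; have := H i; rewrite mnmE.
Qed.


Lemma mingenP N' (J : {mpoly R[N'] } -> Prop) m :
  mingen J m <-> J 'X_[m] /\ (forall m', J 'X_[m'] -> (m' <= m)%MM -> m' = m).
Proof.
split => [[H1 H2]|[H1 H2]]; split => // m' Jm' le; apply: H2 => //.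
  by apply/rdividesX.
by move/rdividesX: le.
Qed.

Variable I : {mpoly R[n]} -> Prop.
Local Notation M := (fun a => I 'X_[a]).

Lemma expansionP f : expansion k I f <-> monU (Ua (k:=k) M) f.
Proof.
have Hupc : upc (Ua (k:=k) M).
  move=> x y [a [ma le]] le'; exists a; split => //; have H := sh_le le'; exact: lepm_trans le H.
split.
  apply: monU_gen => // g [a [ma /PprodP Pg]] m /Pg le; exists a; split => //.
  exact/mingenP.
move=> /(monidU _ Hupc) H; apply: gen_sub H => g [m [[a [ma le]] ->]]; apply: gen_in.
by exists a; split; [exact/mingenP | apply/PprodP/monUX].
Qed.

Lemma mingen_exp b : mingen (expansion k I) b <-> mgE (k:=k) M b.
Proof.
rewrite mingenP /mgE; split => [[H1 H2]|[H1 H2]]; split.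
- by move/expansionP/monUX: H1.
- by move=> b' /monUX /expansionP; apply: H2.
- by apply/expansionP/monUX.
- by move=> b' /expansionP /monUX; apply: H2.
Qed.

End ExpAlg.

Theorem theorem1p7 (K : fieldType) (n : nat) (k : 'I_n -> nat)
  (I : {mpoly K[n]} -> Prop) :
  (forall i, 0 < k i)%N ->
  monomial_ideal I ->
  has_linear_quotients I <-> has_linear_quotients (expansion k I).
Proof.
move=> hk _; split.
  move=> [s [us Hs Ls]].
  have [S [uS HS LS]] := @forward n k (fun a => I 'X_[a]) s us
     (fun a => iff_trans (Hs a) (mingenP _ _)) (proj1 (lqP _ _) Ls).
  exists S; split => //; last by apply/lqP.
  by move=> b; rewrite HS mingen_exp.
move=> [S [uS HS LS]].
have [s [us Hs Ls]] := @reverse n k hk (fun a => I 'X_[a]) S uS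
   (fun b => iff_trans (HS b) (mingen_exp _ _)) (proj1 (lqP _ _) LS).
exists s; split => //; last by apply/lqP.
by move=> a; rewrite Hs mingenP.
Qed.
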